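(* $\mathcal T_\rightarrow=Gh_\rightarrow$ and $\mathcal T_\leftarrow=Gh_\leftarrow$, where $h_\rightarrow=\{(0,i\sinh v,\cosh v):v>0\}$ and $h_\leftarrow=\{(0,i\sinh v,\cosh v):v<0\}$.
   Context: $[z\cdot z']=z_0z'_0-z_1z'_1-z_2z'_2$ on $\mathbb C^3$, $z^2=[z\cdot z]$; $X^{(c)}=\{z\in\mathbb C^3:z^2=-1\}$, $z=x+iy$; $V^+=\{y\in\mathbb R^3:y^2>0,y_0>0\}$; fix $e\in V^+$; $\mathcal T_\rightarrow=\{z=x+iy\in X^{(c)}:y^2<0,{\rm sgn}\det(e,x,y)=-1\}$, $\mathcal T_\leftarrow=\{z=x+iy\in X^{(c)}:y^2<0,{\rm sgn}\det(e,x,y)=+1\}$ (independent of the choice of $e$). $G=SO_0(1,2)$ acting on $X^{(c)}$ by $gz=gx+igy$. *)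

(* Defs.v *)
From HB Require Import structures.
From mathcomp Require Import all_boot all_order all_algebra complex.
From mathcomp Require Import reals sequences exp.
Set Implicit Arguments. Unset Strict Implicit. Unset Printing Implicit Defensive.
Import Order.TTheory GRing.Theory Num.Theory.
Local Open Scope ring_scope.
Local Open Scope complex_scope.

Definition mdot (K : comRingType) (z w : 'cV[K]_3) : K :=
  z ord0 0 * w ord0 0 - z (inord 1) 0 * w (inord 1) 0 - z (inord 2) 0 * w (inord 2) 0.

Definition Xc (R : realType) (z : 'cV[R[i]]_3) : Prop := mdot z z = -1.

Definition reV (R : realType) (z : 'cV[R[i]]_3) : 'cV[R]_3 := map_mx (@complex.Re R) z.
Definition imV (R : realType) (z : 'cV[R[i]]_3) : 'cV[R]_3 := map_mx (@complex.Im R) z.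

Definition Vplus (R : realType) (y : 'cV[R]_3) : Prop := 0 < mdot y y /\ 0 < y ord0 0.

Definition det3 (R : realType) (e x y : 'cV[R]_3) : R :=
  \det (\matrix_(i < 3, j < 3)
          (if (j : nat) == 0%N then e i 0 else if (j : nat) == 1%N then x i 0 else y i 0)).

Definition Tright (R : realType) (e : 'cV[R]_3) (z : 'cV[R[i]]_3) : Prop :=
  Xc z /\ mdot (imV z) (imV z) < 0 /\ Num.sg (det3 e (reV z) (imV z)) = -1.

Definition Tleft (R : realType) (e : 'cV[R]_3) (z : 'cV[R[i]]_3) : Prop :=
  Xc z /\ mdot (imV z) (imV z) < 0 /\ Num.sg (det3 e (reV z) (imV z)) = 1.

Definition Jmx (R : realType) : 'M[R]_3 :=
  \matrix_(i < 3, j < 3) (if i == j then (if (i : nat) == 0%N then 1 else -1) else 0).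

(* G = SO_0(1,2): real 3x3 matrices preserving the form, of determinant 1,
   preserving the time orientation (g_00 > 0, i.e. the identity component). *)
Definition SO012 (R : realType) (g : 'M[R]_3) : Prop :=
  g^T *m Jmx R *m g = Jmx R /\ \det g = 1 /\ 0 < g ord0 ord0.

Definition actG (R : realType) (g : 'M[R]_3) (z : 'cV[R[i]]_3) : 'cV[R[i]]_3 :=
  map_mx (fun r : R => r%:C) (g *m reV z) + 'i *: map_mx (fun r : R => r%:C) (g *m imV z).

Definition sinhR (R : realType) (v : R) : R := (expR v - expR (- v)) / 2.
Definition coshR (R : realType) (v : R) : R := (expR v + expR (- v)) / 2.

Definition hpt (R : realType) (v : R) : 'cV[R[i]]_3 :=
  \col_(k < 3) (if (k : nat) == 0%N then 0
                else if (k : nat) == 1%N then 'i * (sinhR v)%:C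
                else (coshR v)%:C).

(* Main.v *)
Require Import Defs.
From HB Require Import structures.
From mathcomp Require Import all_boot all_order all_algebra complex.
From mathcomp Require Import reals sequences exp.
From mathcomp Require Import ring lra.
Import Order.TTheory GRing.Theory Num.Theory.
Set Implicit Arguments. Unset Strict Implicit. Unset Printing Implicit Defensive.
Local Open Scope ring_scope.
Local Notation i1 := (inord 1 : 'I_3).
Local Notation i2 := (inord 2 : 'I_3).
Lemma L1 : (lift ord0 ord0 : 'I_3) = i1. by apply: val_inj; rewrite /= inordK. Qed.

Lemma sum3 (R : nmodType) (f : 'I_3 -> R) : \sum_i f i = f ord0 + f i1 + f i2.
Proof.
rewrite !big_ord_recl big_ord0 addr0 addrA.
congr (_ + f _ + f _); apply: val_inj; by rewrite /= inordK.
Qed.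

Lemma det33 (R : comPzRingType) (A : 'M[R]_3) : \det A =
  A ord0 ord0 * (A i1 i1 * A i2 i2 - A i1 i2 * A i2 i1)
  - A ord0 i1 * (A i1 ord0 * A i2 i2 - A i1 i2 * A i2 ord0)
  + A ord0 i2 * (A i1 ord0 * A i2 i1 - A i1 i1 * A i2 ord0).
Proof.
rewrite (expand_det_row _ ord0) sum3 /cofactor.
rewrite !(expand_det_row _ ord0) !big_ord_recl !big_ord0 /cofactor !det_mx11 !mxE /=.
pose B : nat -> nat -> R := fun m n : nat => A (inord m) (inord n).
have E : forall i j, A i j = B i j by move=> i j; rewrite /B !inord_val.
rewrite !E !inordK //= /bump /= !inordK //= !add0n !addn0 !addn1.
rewrite !expr0 !expr1 !exprS !expr0. 
ring.
Qed.
Local Open Scope complex_scope.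
Lemma cplx_eq (R : realType) (u v : R[i]) : complex.Re u = complex.Re v -> complex.Im u = complex.Im v -> u = v.
Proof. by case: u => a b; case: v => c d /= -> ->. Qed.

Lemma XcE (R : realType) (z : 'cV[R[i]]_3) :
  Xc z <-> (mdot (reV z) (reV z) - mdot (imV z) (imV z) = -1 /\ mdot (reV z) (imV z) = 0).
Proof.
have zE k : z k 0 = (reV z k 0) +i* (imV z k 0) by rewrite !mxE; case: (z k 0).
rewrite /Xc /mdot !zE; set a0 := reV z _ _; set a1 := reV z _ _; set a2 := reV z _ _.
set b0 := imV z _ _; set b1 := imV z _ _; set b2 := imV z _ _.
split.
  move=> H. have H1 := congr1 (@complex.Re R) H. have H2 := congr1 (@complex.Im R) H.
  move: H1 H2 => /= H1 H2. split.
    rewrite -H1. ring.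
  lra.
move=> [H1 H2]; apply: cplx_eq => /=.
  rewrite -H1; ring.
rewrite oppr0 -[RHS](mulr0 2) -H2; ring.
Qed.

Lemma ord3P (i : 'I_3) : i = ord0 \/ i = i1 \/ i = i2.
Proof.
case: i => [[|[|[|n]]] Hn].
- by left; apply: val_inj.
- by right; left; apply: val_inj; rewrite /= inordK.
- by right; right; apply: val_inj; rewrite /= inordK.
- by [].
Qed.

Definition cols3 (R : realType) (a b d : 'cV[R]_3) : 'M[R]_3 :=
  \matrix_(i < 3, j < 3) (if (j : nat) == 0%N then a i 0 else if (j : nat) == 1%N then b i 0 else d i 0).

Lemma det3E (R : realType) (e x y : 'cV[R]_3) : det3 e x y =
  e ord0 0 * (x i1 0 * y i2 0 - y i1 0 * x i2 0)
  - x ord0 0 * (e i1 0 * y i2 0 - y i1 0 * e i2 0)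
  + y ord0 0 * (e i1 0 * x i2 0 - x i1 0 * e i2 0).
Proof. by rewrite /det3 det33 !mxE !inordK. Qed.

Lemma mulmxE3 (R : realType) (g : 'M[R]_3) (a : 'cV[R]_3) i :
  (g *m a) i 0 = g i ord0 * a ord0 0 + g i i1 * a i1 0 + g i i2 * a i2 0.
Proof. by rewrite mxE sum3. Qed.

Lemma JmxE (R : realType) (i j : 'I_3) :
  Jmx R i j = if (i : nat) == j then (if (i : nat) == 0%N then 1 else -1) else 0.
Proof. by rewrite /Jmx mxE. Qed.

Lemma gramE (R : realType) (g : 'M[R]_3) i j : (g^T *m Jmx R *m g) i j =
  g ord0 i * g ord0 j - g i1 i * g i1 j - g i2 i * g i2 j.
Proof. rewrite mxE sum3 !mxE !sum3 !mxE -!val_eqE /= !inordK //=. ring. Qed.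

Lemma JJ (R : realType) : Jmx R *m Jmx R = 1%:M.
Proof.
apply/matrixP => i j; rewrite mxE sum3 !mxE -!val_eqE /=.
case: (ord3P i) => [->|[->|->]]; case: (ord3P j) => [->|[->|->]];
  rewrite !inordK //= ; ring.
Qed.

Lemma mdot_iso (R : realType) (g : 'M[R]_3) (a b : 'cV[R]_3) :
  g^T *m Jmx R *m g = Jmx R -> mdot (g *m a) (g *m b) = mdot a b.
Proof.
move=> Hg.
have G k l : g ord0 k * g ord0 l - g i1 k * g i1 l - g i2 k * g i2 l = Jmx R k l
  by rewrite -gramE Hg.
transitivity (\sum_k \sum_l a k 0 * b l 0 *
   (g ord0 k * g ord0 l - g i1 k * g i1 l - g i2 k * g i2 l)).
  rewrite /mdot !mulmxE3 !sum3; ring.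
under eq_bigr do under eq_bigr do rewrite G.
rewrite /mdot !sum3 !JmxE !inordK //=; ring.
Qed.

Lemma det3_mul (R : realType) (g : 'M[R]_3) (a b d : 'cV[R]_3) :
  det3 (g *m a) (g *m b) (g *m d) = \det g * det3 a b d.
Proof.
rewrite /det3 -det_mulmx; congr (\det _); apply/matrixP => i j.
rewrite !mxE.
by case: (ord3P j) => [->|[->|->]]; rewrite ?sum3 ?mxE ?inordK //= ?sum3 ?mxE ?inordK.
Qed.

Lemma reV_actG (R : realType) (g : 'M[R]_3) (w : 'cV[R[i]]_3) :
  reV (actG g w) = g *m reV w.
Proof. apply/matrixP => i j; rewrite !mxE /=. ring. Qed.

Lemma imV_actG (R : realType) (g : 'M[R]_3) (w : 'cV[R[i]]_3) :
  imV (actG g w) = g *m imV w.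
Proof. apply/matrixP => i j; rewrite !mxE /=. ring. Qed.

Lemma hptRe (R : realType) (v : R) :
  [/\ reV (hpt v) ord0 0 = 0, reV (hpt v) i1 0 = 0 & reV (hpt v) i2 0 = coshR v].
Proof. rewrite !mxE !inordK //=; split; ring. Qed.

Lemma hptIm (R : realType) (v : R) :
  [/\ imV (hpt v) ord0 0 = 0, imV (hpt v) i1 0 = sinhR v & imV (hpt v) i2 0 = 0].
Proof. rewrite !mxE !inordK //=; split; ring. Qed.

Lemma cosh_sinh (R : realType) (v : R) : coshR v ^+ 2 - sinhR v ^+ 2 = 1.
Proof.
rewrite /coshR /sinhR.
have := expRxMexpNx_1 v; set a := expR v; set b := expR (- v) => H.
by rewrite -[RHS]H; field.
Qed.

Lemma cosh_gt0 (R : realType) (v : R) : 0 < coshR v.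
Proof. by rewrite /coshR divr_gt0 // addr_gt0 // expR_gt0. Qed.

Lemma sinh_gt0 (R : realType) (v : R) : 0 < v -> 0 < sinhR v.
Proof. by move=> hv; rewrite /sinhR divr_gt0 // subr_gt0 ltr_expR; lra. Qed.

Lemma sinh_lt0 (R : realType) (v : R) : v < 0 -> sinhR v < 0.
Proof.
move=> hv; rewrite /sinhR pmulr_llt0 ?invr_gt0 // subr_lt0 ltr_expR; lra.
Qed.

Lemma coshN (R : realType) (v : R) : coshR (- v) = coshR v.
Proof. by rewrite /coshR opprK addrC. Qed.

Lemma sinhN (R : realType) (v : R) : sinhR (- v) = - sinhR v.
Proof. by rewrite /sinhR opprK; field. Qed.

Lemma hyp_param (R : realType) (s c : R) : 0 < s -> 0 < c -> c ^+ 2 = 1 + s ^+ 2 ->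
  exists L, [/\ 0 < L, coshR L = c & sinhR L = s].
Proof.
move=> hs hc hcs.
have hsc : 0 < s + c by lra.
have E1 : expR (ln (s + c)) = s + c by rewrite lnK // posrE.
have H : (s + c) * (c - s) = 1.
  by transitivity (c ^+ 2 - s ^+ 2); [ring | rewrite hcs; ring].
have E2 : expR (- ln (s + c)) = c - s.
  by rewrite expRN E1 -[LHS]mul1r -{1}H; field; rewrite gt_eqF.
have c1 : 1 < c by nra.
exists (ln (s + c)); split.
- by apply: ln_gt0; lra.
- by rewrite /coshR E1 E2; field.
- by rewrite /sinhR E1 E2; field.
Qed.

Lemma revCS (R : realType) (a0 a1 a2 b0 b1 b2 : R) :
  0 < a0 * a0 - a1 * a1 - a2 * a2 -> 0 < a0 ->
  0 < b0 * b0 - b1 * b1 - b2 * b2 -> 0 < b0 ->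
  0 < a0 * b0 - a1 * b1 - a2 * b2.
Proof.
move=> ha ha0 hb hb0.
have h1 : (a1 * b1 + a2 * b2) ^+ 2 <= (a1 * a1 + a2 * a2) * (b1 * b1 + b2 * b2).
  rewrite -subr_ge0.
  have -> : (a1 * a1 + a2 * a2) * (b1 * b1 + b2 * b2) - (a1 * b1 + a2 * b2) ^+ 2
    = (a1 * b2 - a2 * b1) ^+ 2 by ring.
  exact: sqr_ge0.
have h2 : (a1 * a1 + a2 * a2) * (b1 * b1 + b2 * b2) < (a0 * b0) ^+ 2.
  have hA : 0 <= a1 * a1 + a2 * a2 by nra.
  have hB : 0 <= b1 * b1 + b2 * b2 by nra.
  nra.
have hp : 0 < a0 * b0 by nra.
nra.
Qed.

Definition wv (R : realType) (x y : 'cV[R]_3) : 'cV[R]_3 :=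
  \col_(k < 3) (if (k : nat) == 0%N then x i1 0 * y i2 0 - x i2 0 * y i1 0
               else if (k : nat) == 1%N then - (x i2 0 * y ord0 0 - x ord0 0 * y i2 0)
               else - (x ord0 0 * y i1 0 - x i1 0 * y ord0 0)).

Lemma wvE (R : realType) (x y : 'cV[R]_3) :
  [/\ wv x y ord0 0 = x i1 0 * y i2 0 - x i2 0 * y i1 0,
      wv x y i1 0 = - (x i2 0 * y ord0 0 - x ord0 0 * y i2 0) &
      wv x y i2 0 = - (x ord0 0 * y i1 0 - x i1 0 * y ord0 0)].
Proof. by rewrite !mxE !inordK. Qed.

Lemma det3_w (R : realType) (e x y : 'cV[R]_3) : det3 e x y = mdot e (wv x y).
Proof. rewrite det3E /mdot; have [-> -> ->] := wvE x y; ring. Qed.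

Lemma mdot_ww (R : realType) (x y : 'cV[R]_3) :
  mdot (wv x y) (wv x y) = mdot x x * mdot y y - mdot x y ^+ 2.
Proof. rewrite /mdot; have [-> -> ->] := wvE x y; ring. Qed.

Lemma mdot_wx (R : realType) (x y : 'cV[R]_3) : mdot (wv x y) x = 0.
Proof. rewrite /mdot; have [-> -> ->] := wvE x y; ring. Qed.

Lemma mdot_wy (R : realType) (x y : 'cV[R]_3) : mdot (wv x y) y = 0.
Proof. rewrite /mdot; have [-> -> ->] := wvE x y; ring. Qed.

Lemma det3_wyx (R : realType) (x y : 'cV[R]_3) :
  det3 (wv x y) y x = - mdot (wv x y) (wv x y).
Proof. rewrite det3_w /mdot; have [-> -> ->] := wvE y x; have [-> -> ->] := wvE x y; ring. Qed.

Lemma mdotZl (R : realType) (k : R) (a b : 'cV[R]_3) : mdot (k *: a) b = k * mdot a b.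
Proof. rewrite /mdot !mxE; ring. Qed.

Lemma mdotZr (R : realType) (k : R) (a b : 'cV[R]_3) : mdot a (k *: b) = k * mdot a b.
Proof. rewrite /mdot !mxE; ring. Qed.

Lemma mdotC (R : realType) (a b : 'cV[R]_3) : mdot a b = mdot b a.
Proof. rewrite /mdot; ring. Qed.

Lemma det3Z (R : realType) (k l m : R) (a b d : 'cV[R]_3) :
  det3 (k *: a) (l *: b) (m *: d) = k * l * m * det3 a b d.
Proof. rewrite !det3E !mxE; ring. Qed.

Lemma cols3E (R : realType) (a b d : 'cV[R]_3) i :
  [/\ cols3 a b d i ord0 = a i 0, cols3 a b d i i1 = b i 0 & cols3 a b d i i2 = d i 0].
Proof. by rewrite !mxE !inordK. Qed.

Lemma cols3_mul (R : realType) (a b d p : 'cV[R]_3) i :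
  (cols3 a b d *m p) i 0 = p ord0 0 * a i 0 + p i1 0 * b i 0 + p i2 0 * d i 0.
Proof. rewrite mulmxE3; have [-> -> ->] := cols3E a b d i; ring. Qed.

Lemma cols3_gram (R : realType) (a b d : 'cV[R]_3) :
  mdot a a = 1 -> mdot b b = -1 -> mdot d d = -1 ->
  mdot a b = 0 -> mdot a d = 0 -> mdot b d = 0 ->
  (cols3 a b d)^T *m Jmx R *m cols3 a b d = Jmx R.
Proof.
rewrite /mdot => h1 h2 h3 h4 h5 h6.
apply/matrixP => i j; rewrite gramE JmxE.
case: (ord3P i) => [->|[->|->]]; case: (ord3P j) => [->|[->|->]];
  rewrite ?inordK //= !mxE ?inordK //=; lra.
Qed.

Lemma past (R : realType) (e b : 'cV[R]_3) :
  0 < mdot e e -> 0 < e ord0 0 -> 0 < mdot b b -> mdot e b < 0 -> b ord0 0 < 0.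
Proof.
rewrite /mdot => he he0 hb heb.
have [//|hpos|hz] := ltgtP (b ord0 0) 0.
- have := revCS he he0 hb hpos; lra.
- rewrite hz in hb; nra.
Qed.

Lemma partA (R : realType) (e : 'cV[R]_3) (g : 'M[R]_3) (v : R) : Vplus e -> SO012 g ->
  [/\ Xc (actG g (hpt v)),
      mdot (imV (actG g (hpt v))) (imV (actG g (hpt v))) = - sinhR v ^+ 2 &
      exists2 P, 0 < P & det3 e (reV (actG g (hpt v))) (imV (actG g (hpt v)))
                          = - (coshR v * sinhR v) * P].
Proof.
move=> [he he0] [Hg [Hd H00]].
have mxx : mdot (reV (hpt v)) (reV (hpt v)) = - coshR v ^+ 2.
  by rewrite /mdot; have [-> -> ->] := hptRe v; ring.
have myy : mdot (imV (hpt v)) (imV (hpt v)) = - sinhR v ^+ 2.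
  by rewrite /mdot; have [-> -> ->] := hptIm v; ring.
have mxy : mdot (reV (hpt v)) (imV (hpt v)) = 0.
  by rewrite /mdot; have [-> -> ->] := hptRe v; have [-> -> ->] := hptIm v; ring.
split.
- apply/XcE; rewrite reV_actG imV_actG !mdot_iso // mxx myy mxy; split=> //.
  have := cosh_sinh v; lra.
- by rewrite imV_actG mdot_iso.
- rewrite reV_actG imV_actG.
  have Hinv : g *m (Jmx R *m g^T *m Jmx R) = 1%:M.
    apply: mulmx1C.
    have -> : Jmx R *m g^T *m Jmx R *m g = Jmx R *m (g^T *m Jmx R *m g) by rewrite !mulmxA.
    by rewrite Hg JJ.
  set e' := (Jmx R *m g^T *m Jmx R) *m e.
  have He : e = g *m e' by rewrite /e' mulmxA Hinv mul1mx.
  exists (e' ord0 0).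
    have -> : e' ord0 0 = g ord0 ord0 * e ord0 0 - g i1 ord0 * e i1 0 - g i2 ord0 * e i2 0.
      rewrite /e'; do 4 rewrite ?mxE ?sum3; rewrite -?val_eqE /= ?inordK //=; ring.
    have G00 : (g^T *m Jmx R *m g) ord0 ord0 = Jmx R ord0 ord0 by rewrite Hg.
    rewrite gramE JmxE /= in G00.
    apply: revCS => //; by rewrite G00.
  rewrite He det3_mul Hd mul1r det3E; have [-> -> ->] := hptRe v; have [-> -> ->] := hptIm v.
  ring.
Qed.

Lemma partB (R : realType) (e : 'cV[R]_3) (z : 'cV[R[i]]_3) (sg : R) :
  Vplus e -> (sg = 1 \/ sg = -1) -> Xc z -> mdot (imV z) (imV z) < 0 ->
  sg * det3 e (reV z) (imV z) < 0 ->
  exists g : 'M[R]_3, SO012 g /\ exists v : R, 0 < sg * v /\ z = actG g (hpt v).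
Proof.
move=> [he he0] hsg /XcE [Hxx Hxy] Hyy Hdet.
set x := reV z in Hxx Hxy Hdet *; set y := imV z in Hxx Hxy Hyy Hdet *.
set Y := - mdot y y.
have hYdef : Y = - mdot y y by [].
have hY : 0 < Y by rewrite /Y oppr_gt0.
set s := Num.sqrt Y; set c := Num.sqrt (1 + Y).
have hs : 0 < s by rewrite sqrtr_gt0.
have hc : 0 < c by rewrite sqrtr_gt0; lra.
have cne : c != 0 by rewrite gt_eqF.
have sne : s != 0 by rewrite gt_eqF.
have s2 : s ^+ 2 = Y by rewrite sqr_sqrtr // ltW.
have c2 : c ^+ 2 = 1 + Y by rewrite sqr_sqrtr //; lra.
have myy : mdot y y = - s ^+ 2 by rewrite s2; lra.
have mxx : mdot x x = - c ^+ 2 by rewrite c2; lra.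
have sg2 : sg * sg = 1 by case: hsg => ->; rewrite ?mulr1 ?mulrNN ?mulr1.
have [L [hL cL sL]] : exists L, [/\ 0 < L, coshR L = c & sinhR L = s].
  by apply: hyp_param => //; rewrite c2 s2.
set w := wv x y.
have mww : mdot w w = c ^+ 2 * s ^+ 2 by rewrite mdot_ww mxx myy Hxy; ring.
set u0 := (- sg / (c * s)) *: w; set u1 := (sg / s) *: y; set u2 := c^-1 *: x.
exists (cols3 u0 u1 u2); split.
- split; [|split].
  + apply: cols3_gram.
    * rewrite /u0 mdotZl mdotZr mww; transitivity (sg * sg) => //.
      by field; rewrite ?sne ?cne.
    * rewrite /u1 mdotZl mdotZr myy; transitivity (- (sg * sg)); last by rewrite sg2.
      by field; rewrite ?sne ?cne.
    * rewrite /u2 mdotZl mdotZr mxx.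
      by field; rewrite ?sne ?cne.
    * by rewrite /u0 /u1 mdotZl mdotZr mdot_wy !mulr0.
    * by rewrite /u0 /u2 mdotZl mdotZr mdot_wx !mulr0.
    * by rewrite /u1 /u2 mdotZl mdotZr mdotC Hxy !mulr0.
  + rewrite (_ : \det (cols3 u0 u1 u2) = det3 u0 u1 u2) //.
    rewrite /u0 /u1 /u2 det3Z det3_wyx mww.
    transitivity (sg * sg) => //.
    by field; rewrite ?sne ?cne.
  + have [-> _ _] := cols3E u0 u1 u2 ord0.
    have Hb : (sg *: w) ord0 0 < 0.
      apply: (past he he0).
        rewrite mdotZl mdotZr mww mulrA sg2 mul1r.
        by rewrite mulr_gt0 // exprn_gt0.
      by rewrite mdotZr /w -det3_w.
    rewrite mxE in Hb.
    rewrite /u0 mxE.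
    have -> : - sg / (c * s) * w ord0 0 = - (sg * w ord0 0) / (c * s) by ring.
    by rewrite divr_gt0 ?mulr_gt0 // oppr_gt0.
- have cv : coshR (sg * L) = c.
    by case: hsg => ->; rewrite ?mul1r ?mulN1r ?coshN cL.
  have sv : sinhR (sg * L) = sg * s.
    by case: hsg => ->; rewrite ?mul1r ?mulN1r ?sinhN sL.
  exists (sg * L); split.
    by rewrite mulrA sg2 mul1r.
  have Ex : cols3 u0 u1 u2 *m reV (hpt (sg * L)) = x.
    apply/matrixP => i j; rewrite (ord1 j) cols3_mul.
    have [-> -> ->] := hptRe (sg * L).
    rewrite cv /u2 !mxE !mul0r !add0r.
    by field; rewrite ?sne ?cne.
  have Ey : cols3 u0 u1 u2 *m imV (hpt (sg * L)) = y.
    apply/matrixP => i j; rewrite (ord1 j) cols3_mul.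
    have [-> -> ->] := hptIm (sg * L).
    rewrite sv /u1 !mxE !mul0r add0r addr0.
    transitivity (sg * sg * complex.Im (z i 0)); last by rewrite sg2 mul1r.
    by field; rewrite ?sne ?cne.
  rewrite /actG Ex Ey /x /y.
  apply/matrixP => i j; rewrite !mxE.
  by apply: cplx_eq => /=; ring.
Qed.

Local Close Scope complex_scope.
Unset Implicit Arguments.

Theorem proposition5 (R : realType) (e : 'cV[R]_3) :
  Vplus e ->
  (forall z : 'cV[R[i]]_3,
      Tright e z <-> exists g : 'M[R]_3, SO012 g /\ exists v : R, 0 < v /\ z = actG g (hpt v)) /\
  (forall z : 'cV[R[i]]_3,
      Tleft e z <-> exists g : 'M[R]_3, SO012 g /\ exists v : R, v < 0 /\ z = actG g (hpt v)).
Proof.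
move=> He; split => z; split.
- move=> [Xz [Hy Hs]].
  have Hd : det3 e (reV z) (imV z) < 0 by move/eqP: Hs; rewrite sgr_cp0.
  have := partB He (or_introl erefl) Xz Hy; rewrite mul1r => /(_ Hd) [g [Hg [v [Hv ->]]]].
  by exists g; split=> //; exists v; split=> //; rewrite mul1r in Hv.
- move=> [g [Hg [v [Hv ->]]]].
  have [X1 X2 [P HP X3]] := partA v He Hg.
  have hs := sinh_gt0 Hv; have hc := cosh_gt0 v.
  split=> //; split; first by rewrite X2; nra.
  rewrite X3; apply/eqP; rewrite sgr_cp0; have := mulr_gt0 (mulr_gt0 hc hs) HP; lra.
- move=> [Xz [Hy Hs]].
  have Hd : 0 < det3 e (reV z) (imV z) by move/eqP: Hs; rewrite sgr_cp0.
  have := partB He (or_intror erefl) Xz Hy; rewrite mulN1r oppr_lt0 => /(_ Hd) [g [Hg [v [Hv ->]]]].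
  by exists g; split=> //; exists v; split=> //; rewrite mulN1r oppr_gt0 in Hv.
- move=> [g [Hg [v [Hv ->]]]].
  have [X1 X2 [P HP X3]] := partA v He Hg.
  have hs := sinh_lt0 Hv; have hc := cosh_gt0 v.
  split=> //; split; first by rewrite X2; nra.
  have hs2 : 0 < - sinhR v by rewrite oppr_gt0.
  rewrite X3; apply/eqP; rewrite sgr_cp0; have := mulr_gt0 (mulr_gt0 hc hs2) HP; lra.
Qed.
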